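(* Let $X$ be a binary $N\times t$ matrix that is 3-good, let $S\subseteq[t]$ with $|S|=3$, $\mathbf{y}=r(X,S)$, $H=H(X,3,\mathbf{y})=([t],E)$, $L_1=\log_2\log_2 t$, $L_2=3L_1$. Let $G'=([t],E')$ be the graph in which distinct vertices $v_1,v_2$ are adjacent iff at least $L_2$ hyperedges of $E$ contain both, and let $E_1\subseteq E$ be the set of hyperedges containing some edge of $G'$ as a subset. For each $e\in E_1$ choose (arbitrarily) an additional vertex $v\in e$ such that $e\setminus\{v\}\in E'$. Let $G''=([t],E'')$ be the directed graph (without multiple arcs) containing, for every $e=\{v_1,v_2,v_3\}\in E_1$ with chosen additional vertex $v_1$, the arcs $(v_1,v_2),(v_1,v_3),(v_2,v_3),(v_3,v_2)$, and no other arcs. Then every vertex of $G''$ has out-degree less than $3L_1^2$.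
   Context: For a binary $N\times t$ matrix $X$ with columns $x(1),\dots,x(t)$ and $S\subseteq[t]$, $r(X,S)=\bigvee_{j\in S}x(j)$ (coordinatewise Boolean OR). For $\mathbf{y}\in\{0,1\}^N$, $H(X,3,\mathbf{y})$ is the $3$-uniform hypergraph on $[t]$ whose hyperedges are all $3$-element $S\subseteq[t]$ with $r(X,S)=\mathbf{y}$. A $(3,k)$ configuration of size $L$ is a set of $L$ hyperedges $e_1,\dots,e_L$ with a set $U$, $|U|=k$, such that $e_i\cap e_j=U$ for all $i\ne j$. Fix $p\in(0,1)$; $\Pr_1(s,w)$ is the probability that the OR of $s$ independent uniformly random length-$N$ binary columns of weight $\lfloor pN\rfloor$ equals a fixed vector of weight $w$; $\Pr_2(s,w_1,w)$ is the probability that the OR of $s$ such columns together with a fixed column $\mathbf{y}_1$ of weight $w_1$ equals a fixed vector $\mathbf{y}$ of weight $w$ with $\mathbf{y}\vee\mathbf{y}_1=\mathbf{y}$. With $L_1=\log_2\log_2 t$, $X$ is 3-good if: (1) for every $\mathbf{y}$, $H(X,3,\mathbf{y})$ has no $(3,1)$ configuration of size $L_1$; (2) for every $\mathbf{y}$ with $|\mathbf{y}|=w$, $H(X,3,\mathbf{y})$ has no $(3,0)$ configuration of size $10\max(t^3\Pr_1(3,w),N)$; (3) for all $\mathbf{y},\mathbf{y}_1$ with $\mathbf{y}\vee\mathbf{y}_1=\mathbf{y}$, $|\mathbf{y}_1|=w_1$, $|\mathbf{y}|=w$, the number of $j$ with $\mathbf{y}_1\vee x(j)=\mathbf{y}$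 is less than $10B(N,t)$, where $B(N,t)=t\Pr_2(1,w_1,w)$ if this exceeds $N$, $B(N,t)=N$ if $t^{-1/\sqrt{L_1}}\le t\Pr_2(1,w_1,w)\le N$, and $B(N,t)=L_1/10$ if $t\Pr_2(1,w_1,w)<t^{-1/\sqrt{L_1}}$; (4) for every $\mathbf{y}$ with $|\mathbf{y}|=w$ and integer $w_1\le w$, the number of pairwise disjoint pairs $\{j_1,j_2\}\subseteq[t]$ with $x(j_1)\vee x(j_2)\vee\mathbf{y}=\mathbf{y}$ and $|x(j_1)\vee x(j_2)|=w_1$ is less than $10\max(N,\binom{w}{w_1}t^2\Pr_1(2,w_1))$. *)

(* Defs.v *)
From mathcomp Require Import all_boot all_order all_algebra.
From mathcomp Require Import boolp reals exp.
Set Implicit Arguments. Unset Strict Implicit. Unset Printing Implicit Defensive.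
Import Order.TTheory GRing.Theory Num.Theory.
Local Open Scope ring_scope.

Section Defs.
Variables (R : realType) (N t : nat).
Implicit Types (X : 'M[bool]_(N, t)) (y : {ffun 'I_N -> bool}).

Definition wt y : nat := #|[set i | y i]|.

Definition vor (a b : {ffun 'I_N -> bool}) : {ffun 'I_N -> bool} :=
  [ffun i => a i || b i].

Definition xcol X (j : 'I_t) : {ffun 'I_N -> bool} := [ffun i => X i j].

Definition rX X (S : {set 'I_t}) : {ffun 'I_N -> bool} :=
  [ffun i => [exists j in S, X i j]].

Definition H3 X y : {set {set 'I_t}} :=
  [set S : {set 'I_t} | (#|S| == 3)%N && (rX X S == y)].

Definition config (E : {set {set 'I_t}}) (k : nat) (F : {set {set 'I_t}}) :=
  F \subset E /\
  exists U : {set 'I_t}, #|U| = k /\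
    forall e1 e2, e1 \in F -> e2 \in F -> e1 != e2 -> e1 :&: e2 = U.

Definition log2 (x : R) : R := ln x / ln 2.
Definition L1 : R := log2 (log2 t%:R).

Definition kw (p : R) : nat := Num.truncn (p * N%:R).

(* canonical fixed vector of weight w (for w <= N) *)
Definition yw (w : nat) : {ffun 'I_N -> bool} := [ffun i : 'I_N => (i < w)%N].

Definition orfam s (f : {ffun 'I_s -> {ffun 'I_N -> bool}}) : {ffun 'I_N -> bool} :=
  [ffun i => [exists j, f j i]].

(* Pr_1(s,w): probability that the OR of s independent uniformly random
   columns of weight floor(pN) equals a fixed vector of weight w. *)
Definition Pr1 (p : R) (s w : nat) : R :=
  #|[set f : {ffun 'I_s -> {ffun 'I_N -> bool}} |
      [forall j, wt (f j) == kw p] && (orfam f == yw w)]|%:R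
  / ('C(N, kw p) ^ s)%:R.

(* Pr_2(s,w1,w): probability that the OR of s such random columns together
   with a fixed column y1 of weight w1 equals a fixed y of weight w,
   y1 <= y (taken y1 = yw w1, y = yw w). *)
Definition Pr2 (p : R) (s w1 w : nat) : R :=
  #|[set f : {ffun 'I_s -> {ffun 'I_N -> bool}} |
      [forall j, wt (f j) == kw p] && (vor (orfam f) (yw w1) == yw w)]|%:R
  / ('C(N, kw p) ^ s)%:R.

Definition Bnt (p : R) (w1 w : nat) : R :=
  let q := t%:R * Pr2 p 1 w1 w in
  if N%:R < q then q
  else if powR t%:R (- (Num.sqrt L1)^-1) <= q then N%:R
  else L1 / 10.

Definition good3 (p : R) X : Prop :=
  (forall y F, config (H3 X y) 1 F -> #|F|%:R < L1) /\
  (forall y F, config (H3 X y) 0 F ->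
     #|F|%:R < 10 * Num.max (t%:R ^+ 3 * Pr1 p 3 (wt y)) N%:R) /\
  (forall y y1, vor y y1 = y ->
     #|[set j : 'I_t | vor y1 (xcol X j) == y]|%:R < 10 * Bnt p (wt y1) (wt y)) /\
  (forall y (w1 : nat) (P : {set {set 'I_t}}), (w1 <= wt y)%N ->
     (forall q, q \in P -> exists j1 j2 : 'I_t, j1 != j2 /\ q = [set j1; j2] /\
        vor (vor (xcol X j1) (xcol X j2)) y = y /\
        wt (vor (xcol X j1) (xcol X j2)) = w1) ->
     (forall q1 q2, q1 \in P -> q2 \in P -> q1 != q2 -> [disjoint q1 & q2]) ->
     #|P|%:R < 10 * Num.max N%:R ('C(wt y, w1)%:R * t%:R ^+ 2 * Pr1 p 2 w1)).

Definition codeg (E : {set {set 'I_t}}) (v1 v2 : 'I_t) : nat :=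
  #|[set e in E | (v1 \in e) && (v2 \in e)]|.

Definition Gp_edge (E : {set {set 'I_t}}) (f : {set 'I_t}) : Prop :=
  exists v1 v2, v1 != v2 /\ f = [set v1; v2] /\ 3 * L1 <= (codeg E v1 v2)%:R.

Definition inE1 (E : {set {set 'I_t}}) (e : {set 'I_t}) : Prop :=
  e \in E /\ exists f : {set 'I_t}, f \subset e /\ Gp_edge E f.

Definition arc (E : {set {set 'I_t}}) (c : {set 'I_t} -> 'I_t) (v u : 'I_t) : Prop :=
  exists e, inE1 E e /\
    ((v = c e /\ u \in e /\ u != c e) \/
     (v \in e /\ u \in e /\ v != c e /\ u != c e /\ v != u)).

Definition outdeg (E : {set {set 'I_t}}) (c : {set 'I_t} -> 'I_t) (v : 'I_t) : nat :=
  #|[set u | `[< arc E c v u >] ]|.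

End Defs.

(* Main.v *)
Require Import Defs.
From mathcomp Require Import all_boot all_order all_algebra.
From mathcomp Require Import boolp reals exp.
From mathcomp Require Import lra.
Import Order.TTheory GRing.Theory Num.Theory.
Local Open Scope ring_scope.
Set Implicit Arguments. Unset Strict Implicit.

Lemma card_bigcup_le (I T : finType) (A : {set I}) (f : I -> {set T}) :
  (#|\bigcup_(i in A) f i| <= \sum_(i in A) #|f i|)%N.
Proof.
elim/big_rec2: _ => [|i n U _ IH]; first by rewrite cards0.
by rewrite (leq_trans (leq_card_setU _ _)) // leq_add2l.
Qed.

Lemma set3_eq (T : finType) (e : {set T}) a b c :
  #|e| = 3%N -> a \in e -> b \in e -> c \in e -> a != b -> a != c -> b != c ->
  e = [set a; b; c].
Proof.
move=> he ha hb hc ab ac bc; apply/eqP; rewrite eq_sym eqEcard he.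
rewrite !subUset !sub1set ha hb hc /=.
rewrite cardsU cards2 cards1 ab; have -> : (a |: [set b]) :&: [set c] = set0 by apply/setP=> z; rewrite !inE; apply/negP=> /andP[/orP[]/eqP-> /eqP E]; [rewrite E eqxx in ac|rewrite E eqxx in bc].
by rewrite cards0.
Qed.

Lemma codegC (t : nat) (E : {set {set 'I_t}}) a b : codeg E a b = codeg E b a.
Proof. by rewrite /codeg; apply: eq_card => e; rewrite !inE (andbC (a \in e)). Qed.

Definition Nb (R : realType) (t : nat) (E : {set {set 'I_t}}) (a : 'I_t) : {set 'I_t} :=
  [set b | (a != b) && (3 * L1 R t <= (codeg E a b)%:R)].

Lemma config1 (t : nat) (E F : {set {set 'I_t}}) v :
  F \subset E ->
  (forall e1 e2, e1 \in F -> e2 \in F -> e1 != e2 -> e1 :&: e2 = [set v]) ->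
  config E 1 F.
Proof. by move=> h1 h2; split => //; exists [set v]; rewrite cards1. Qed.

Lemma card_minus (t : nat) (f : {set 'I_t}) v : #|f| = 3%N -> v \in f -> #|f :\ v| = 2%N.
Proof. by move=> h vf; move: h; rewrite (cardsD1 v) vf => -[]. Qed.

Lemma stepA (R : realType) (t : nat) (E : {set {set 'I_t}}) :
  (forall e, e \in E -> #|e| = 3%N) ->
  (forall F, config E 1 F -> #|F|%:R < L1 R t) ->
  forall v (D0 : {set 'I_t}), D0 \subset Nb R E v ->
  (#|D0|.-1)%:R < L1 R t -> #|D0|%:R < L1 R t.
Proof.
move=> card3 cfg1 v D0 sub hk.
set L := L1 R t in cfg1 hk *.
rewrite ltNge; apply/negP => hge.
pose P := fun F : {set {set 'I_t}} => [&& F \subset E,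
   [forall e in F, (v \in e) && (#|e :&: D0| == 1%N)] &
   [forall e1 in F, forall e2 in F, (e1 != e2) ==> (e1 :&: e2 == [set v])]].
have P0 : P set0.
  rewrite /P sub0set /=; apply/andP; split; apply/forall_inP => e; by rewrite inE.
have [F PF Fmax] := arg_maxnP (fun F : {set {set 'I_t}} => #|F|) P0.
move: PF; rewrite /P => /and3P[FE /forall_inP Fin /forall_inP Fpair].
have hF : #|F|%:R < L.
  apply: cfg1; apply: (config1 (v:=v) FE) => e1 e2 h1 h2 ne.
  by move/forall_inP: (Fpair e1 h1) => /(_ e2 h2) /implyP /(_ ne) /eqP.
have ltF : (#|F| < #|D0|)%N by rewrite -(ltr_nat R); apply: lt_le_trans hF hge.
have vNb : v \notin Nb R E v by rewrite inE eqxx.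
have [x xD0 xnot] : exists2 x, x \in D0 & forall f, f \in F -> x \notin f.
  case: (boolP [exists x in D0, [forall f in F, x \notin f]]) =>
    [/exists_inP[x xD /forall_inP h]|/exists_inPn hn]; first by exists x.
  exfalso.
  have : D0 \subset \bigcup_(f in F) (f :&: D0).
    apply/subsetP => z zD; have := hn z zD; rewrite negb_forall_in => /exists_inP[f fF].
    by rewrite negbK => zf; apply/bigcupP; exists f => //; rewrite inE zf zD.
  move/subset_leq_card => h.
  have := leq_trans h (card_bigcup_le _ _).
  rewrite (eq_bigr (fun _ => 1%N)) ?sum1_card; last first.
    by move=> f fF; have /andP[_ /eqP] := Fin f fF.
  by rewrite leqNgt ltF.
have := subsetP sub x xD0; rewrite inE => /andP[vx hcod].
pose Ex := [set e in E | (v \in e) && (x \in e)].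
have cEx : #|Ex| = codeg E v x := erefl.
pose B := (\bigcup_(f in F) (f :\ v)) :|: (D0 :\ x).
have hB : (#|B| <= 2 * #|F| + #|D0|.-1)%N.
  apply: leq_trans (leq_card_setU _ _) _; apply: leq_add.
    apply: leq_trans (card_bigcup_le _ _) _.
    rewrite (eq_bigr (fun _ => 2%N)); first by rewrite sum_nat_const mulnC.
    move=> f fF; have /andP[vf _] := Fin f fF; apply: card_minus vf.
    by apply: card3; apply: (subsetP FE).
  by rewrite [X in (_ <= X.-1)%N](cardsD1 x D0) xD0 add1n /=.
have hEx : (#|B| < #|Ex|)%N.
  rewrite -(ltr_nat R); apply: (le_lt_trans (y := (2 * #|F| + #|D0|.-1)%:R)).
    by rewrite ler_nat.
  rewrite cEx natrD natrM; apply: (lt_le_trans _ hcod).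
  rewrite -/L; move: hF hk; set a := #|F|%:R; set b := (#|D0|.-1)%:R; lra.
pose Bad := [set e in Ex | ~~ [disjoint e & B]].
have hBad : Bad \subset [set [set v; x; w] | w in B].
  apply/subsetP => e; rewrite !inE => /andP[/and3P[eE ve xe]].
  rewrite -setI_eq0 => /set0Pn[w]; rewrite inE => /andP[we wB].
  apply/imsetP; exists w => //.
  have [wv wx] : w != v /\ w != x.
    move: wB; rewrite /B inE => /orP[/bigcupP[f fF]|]; rewrite !inE.
      move=> /andP[-> wf]; split => //; apply/eqP => wx; move: (xnot f fF).
      by rewrite -wx wf.
    move=> /andP[-> wD]; split => //; apply/eqP => wv.
    by move: (subsetP sub w wD); rewrite wv (negbTE vNb).
  apply: set3_eq => //; [exact: card3|by rewrite eq_sym|by rewrite eq_sym].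
have : ~~ (Ex \subset Bad).
  apply/negP => /subset_leq_card h.
  have := leq_trans h (leq_trans (subset_leq_card hBad) (leq_imset_card _ _)).
  by rewrite leqNgt hEx.
case/subsetPn => e eEx eNBad.
move: (eEx); rewrite inE => /andP[eE /andP[ve xe]].
have dis z : z \in e -> z \in B -> False.
  move=> ze zB; move: eNBad; rewrite inE eEx /= negbK => /disjointFr/(_ ze).
  by rewrite zB.
have eNF : e \notin F by apply/negP => /xnot; rewrite xe.
have ef f : f \in F -> e :&: f = [set v].
  move=> fF; have /andP[vf _] := Fin f fF.
  apply/setP => z; rewrite !inE; case: (eqVneq z v) => [->|zv]; first by rewrite ve vf.
  apply/negP => /andP[ze zf]; apply: (dis z ze); rewrite /B inE; apply/orP; left.
  by apply/bigcupP; exists f => //; rewrite !inE zv zf.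
have PeF : P (e |: F).
  rewrite /P subUset sub1set eE FE /=; apply/andP; split.
    apply/forall_inP => f /setU1P[->|fF]; last exact: Fin.
    rewrite ve /=; apply/cards1P; exists x; apply/setP => z; rewrite !inE.
    case: (eqVneq z x) => [->|zx]; first by rewrite xe xD0.
    apply/negP => /andP[ze zD]; apply: (dis z ze).
    by rewrite /B inE; apply/orP; right; rewrite !inE zx zD.
  apply/forall_inP => f1 /setU1P[->|f1F]; apply/forall_inP => f2 /setU1P[->|f2F];
    apply/implyP => ne.
  - by rewrite eqxx in ne.
  - by rewrite ef.
  - by rewrite setIC ef.
  - by have /forall_inP/(_ f2 f2F)/implyP/(_ ne) := Fpair f1 f1F.
have := Fmax _ PeF; rewrite cardsU1 eNF /=.
by rewrite ltnn.
Qed.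

Lemma deg_bound (R : realType) (t : nat) (E : {set {set 'I_t}}) :
  (forall e, e \in E -> #|e| = 3%N) ->
  (forall F, config E 1 F -> #|F|%:R < L1 R t) ->
  forall v, #|Nb R E v|%:R < L1 R t.
Proof.
move=> card3 cfg1 v.
have Lpos : 0 < L1 R t.
  have := cfg1 set0; rewrite cards0; apply; apply: (config1 (v:=v)); first exact: sub0set.
  by move=> e1 e2; rewrite inE.
suff H : forall n (D0 : {set 'I_t}), #|D0| = n -> D0 \subset Nb R E v -> #|D0|%:R < L1 R t.
  exact: (H _ (Nb R E v) erefl (subxx _)).
move=> n; elim: n => [|n IH] D0 hD sub; first by rewrite hD.
apply: (stepA card3 cfg1 sub).
have : (0 < #|D0|)%N by rewrite hD.
case/card_gt0P => x xD.
have hx : #|D0 :\ x| = n by move: hD; rewrite (cardsD1 x D0) xD add1n => -[].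
rewrite hD /= -hx; apply: IH => //.
by apply: subset_trans sub; apply: subD1set.
Qed.

Lemma Nb_pair (R : realType) (t : nat) (E : {set {set 'I_t}}) v1 v2 :
  v1 != v2 -> 3 * L1 R t <= (codeg E v1 v2)%:R ->
  v2 \in Nb R E v1 /\ v1 \in Nb R E v2.
Proof.
by move=> ne h; rewrite !inE ne eq_sym ne h codegC h.
Qed.

Lemma out_bound (R : realType) (t : nat) (E : {set {set 'I_t}}) (c : {set 'I_t} -> 'I_t) v :
  (forall e, e \in E -> #|e| = 3%N) ->
  (forall F, config E 1 F -> #|F|%:R < L1 R t) ->
  (forall e, inE1 R E e -> c e \in e /\ Gp_edge R E (e :\ c e)) ->
  exists m (W : {set 'I_t}), [/\ m%:R < L1 R t, (#|W| <= 2 * m)%N &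
     [set u | `[< Defs.arc R E c v u >] ] \subset (\bigcup_(w in W) Nb R E w) :|: Nb R E v].
Proof.
move=> card3 cfg1 hc.
pose P := fun F : {set {set 'I_t}} => [&& F \subset E,
   [forall e in F, (v \in e) &&
      [forall a in e :\ v, forall b in e :\ v, (a != b) ==> (b \in Nb R E a)]] &
   [forall e1 in F, forall e2 in F, (e1 != e2) ==> (e1 :&: e2 == [set v])]].
have P0 : P set0.
  rewrite /P sub0set /=; apply/andP; split; apply/forall_inP => e; by rewrite inE.
have [F PF Fmax] := arg_maxnP (fun F : {set {set 'I_t}} => #|F|) P0.
move: PF; rewrite /P => /and3P[FE /forall_inP Fin /forall_inP Fpair].
have hF : #|F|%:R < L1 R t.
  apply: cfg1; apply: (config1 (v:=v) FE) => e1 e2 h1 h2 ne.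
  by move/forall_inP: (Fpair e1 h1) => /(_ e2 h2) /implyP /(_ ne) /eqP.
pose W := \bigcup_(f in F) (f :\ v).
exists #|F|, W; split => //.
  apply: leq_trans (card_bigcup_le _ _) _.
  rewrite (eq_bigr (fun _ => 2%N)); first by rewrite sum_nat_const mulnC.
  move=> f fF; have /andP[vf _] := Fin f fF; apply: card_minus vf.
  by apply: card3; apply: (subsetP FE).
apply/subsetP => u; rewrite inE => /asboolP [e [he1 hcase]].
have [ce_in [v1 [v2 [v12 [hev hcod]]]]] := hc e he1.
have [eE _] := he1.
have [n12 n21] := Nb_pair v12 hcod.
have inev z : z \in e :\ c e -> z = v1 \/ z = v2.
  by rewrite hev !inE => /orP[]/eqP->; [left|right].
case: hcase => [[hv [hu hune]] | [hv [hu [hvne [hune hvu]]]]]; last first.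
  have /inev hv' : v \in e :\ c e by rewrite !inE hvne hv.
  have /inev hu' : u \in e :\ c e by rewrite !inE hune hu.
  rewrite inE; apply/orP; right.
  by move: hvu; case: hv' => ->; case: hu' => ->; rewrite ?eqxx // => _.
have [w [wu [uw [wuN wpair]]]] : exists w, [/\ u \in Nb R E w, w \in Nb R E u,
    w != u & forall z, z \in e :\ v -> z = u \/ z = w].
  have /inev hu' : u \in e :\ c e by rewrite !inE hune hu.
  rewrite hv; case: hu' => ->.
    exists v2; split; [done|done|by rewrite eq_sym|].
    by move=> z /inev[]->; [left|right].
  exists v1; split; [done|done|done|].
  by move=> z /inev[]->; [right|left].
rewrite inE; apply/orP; left.
case: (boolP (w \in W)) => wW; first by apply/bigcupP; exists w.
case: (boolP (u \in W)) => uW.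
  case/bigcupP: (uW) => f fF uf.
  have /andP[vf /forall_inP hf] := Fin f fF.
  have c2 : #|f :\ v| = 2%N by apply: card_minus vf; apply: card3; apply: (subsetP FE).
  have [a [au af]] : exists a, a != u /\ a \in f :\ v.
    move/eqP: c2 => /cards2P[a1 [a2 [a12 hf2]]].
    move: uf; rewrite hf2 !inE => /orP[]/eqP uE.
      by exists a2; rewrite !inE eqxx orbT uE eq_sym.
    by exists a1; rewrite !inE eqxx uE.
  apply/bigcupP; exists a; first by apply/bigcupP; exists f.
  by move: (hf a af) => /forall_inP/(_ u uf)/implyP; apply.
exfalso.
have ve : v \in e by rewrite hv.
have eNF : e \notin F.
  apply/negP => eF; move/negP: uW; apply; apply/bigcupP; exists e => //.
  by rewrite !inE hu hv hune.
have ef f : f \in F -> e :&: f = [set v].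
  move=> fF; have /andP[vf _] := Fin f fF.
  apply/setP => z; rewrite !inE; case: (eqVneq z v) => [->|zv]; first by rewrite ve vf.
  apply/negP => /andP[ze zf].
  have zW : z \in W by apply/bigcupP; exists f => //; rewrite !inE zv zf.
  have : z \in e :\ v by rewrite !inE zv ze.
  by case/wpair => zE; [move: uW|move: wW]; rewrite -zE zW.
have PeF : P (e |: F).
  rewrite /P subUset sub1set eE FE /=; apply/andP; split.
    apply/forall_inP => f /setU1P[->|fF]; last exact: Fin.
    rewrite ve /=; apply/forall_inP => a /wpair ha; apply/forall_inP => b /wpair hb.
    apply/implyP => ab.
    case: ha hb ab => -> [] ->; rewrite ?eqxx //.
  apply/forall_inP => f1 /setU1P[->|f1F]; apply/forall_inP => f2 /setU1P[->|f2F];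
    apply/implyP => ne.
  - by rewrite eqxx in ne.
  - by rewrite ef.
  - by rewrite setIC ef.
  - by have /forall_inP/(_ f2 f2F)/implyP/(_ ne) := Fpair f1 f1F.
have := Fmax _ PeF; rewrite cardsU1 eNF /=.
by rewrite ltnn.
Qed.
Unset Implicit Arguments.

Theorem lemma5 (R : realType) (N t : nat) (p : R) (X : 'M[bool]_(N, t))
  (S : {set 'I_t}) (c : {set 'I_t} -> 'I_t) :
  0 < p < 1 ->
  good3 p X ->
  #|S| = 3%N ->
  (forall e, inE1 R (H3 X (rX X S)) e ->
     c e \in e /\ Gp_edge R (H3 X (rX X S)) (e :\ c e)) ->
  forall v : 'I_t, (outdeg R (H3 X (rX X S)) c v)%:R < 3 * (L1 R t) ^+ 2.
Proof.
move=> hp [g1 _] hS hc v.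
set E := H3 X (rX X S) in hc *.
have card3 : forall e, e \in E -> #|e| = 3%N by move=> e; rewrite inE => /andP[/eqP].
have cfg1 : forall F, config E 1 F -> #|F|%:R < L1 R t := fun F => g1 (rX X S) F.
have deg := deg_bound card3 cfg1.
have Lpos : 0 < L1 R t by apply: le_lt_trans (ler0n _ _) (deg v).
have [m [W [hm hW hsub]]] := out_bound v card3 cfg1 hc.
rewrite /outdeg.
have h1 := subset_leq_card hsub.
have h2 := leq_trans h1 (leq_trans (leq_card_setU _ _) (leq_add (card_bigcup_le _ _) (leqnn _))).
set L := L1 R t in hm deg Lpos *.
set s := (\sum_(w in W) #|Nb R E w|)%N in h2.
apply: (le_lt_trans (y := (s + #|Nb R E v|)%:R)); first by rewrite ler_nat.
case: (ltrP 1 L) => hL.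
  rewrite natrD.
  have hs : s%:R <= #|W|%:R * L.
    rewrite /s natr_sum; apply: (le_trans (y := \sum_(w in W) L)).
      by apply: ler_sum => w _; apply: ltW (deg w).
    by rewrite sumr_const mulr_natl.
  have hW' : #|W|%:R <= 2 * m%:R :> R by rewrite -natrM ler_nat.
  have hv := deg v.
  have a1 := ler_wpM2r (ltW Lpos) hW'.
  have a2 : m%:R * L < L * L by rewrite ltr_pM2r.
  have a3 : L * 1 < L * L by rewrite ltr_pM2l.
  rewrite expr2; nra.
have z a : #|Nb R E a| = 0%N.
  have : (#|Nb R E a|%:R < 1 :> R) := lt_le_trans (deg a) hL.
  by rewrite ltrn1 ltnS leqn0 => /eqP.
rewrite /s big1 ?z // add0n.
have : 0 < L * L by apply: mulr_gt0.
rewrite expr2; lra.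
Qed.
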